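(* Suppose $\rho=(\rho_i)_{i=1}^I \in C(\mathbb{R}_+,\mathbb{R}_+)^I$, and let $\psi_i(u):=\int_0^u \rho_i(u')du'$. Then $\rho \in \mathcal{D}_{\mathrm{density}}$ if and only if $\psi \in \mathcal{D}^2$.
   Context: Fix $I\in\mathbb{N}$. $\mathcal{C}=\{f\in C(\mathbb{R}_+,\mathbb{R}_+):f(0)=0,f\text{ non-decreasing}\}$, $\mathcal{C}^\uparrow=\{f\in\mathcal{C}:f\text{ strictly increasing},\lim_{u\to\infty}f(u)=\infty\}$, $\mathcal{C}^q=\{f\in\mathcal{C}:f^{\mathbb{R}}\in C^q(\mathbb{R},\mathbb{R})\}$ where $f^{\mathbb{R}}$ extends $f$ by $0$ on $(-\infty,0)$. For $\psi\in\mathcal{C}^I$, $\phi_i(u)=u-\sum_{j=1}^I2(i\wedge j)\psi_j(u)$. $\mathcal{D}=\{\psi\in\mathcal{C}^I:\phi_I\in\mathcal{C}^\uparrow,\sum_ii\sup_{u_1\neq u_2}\frac{\psi_i(u_1)-\psi_i(u_2)}{\phi_i(u_1)-\phi_i(u_2)}<\frac12\}$, $\mathcal{D}^2=\mathcal{D}\cap(\mathcal{C}^2)^I$. $\mathcal{C}^1(\mathbb{R}_+,\mathbb{R}_+)$: functions $f:\mathbb{R}_+\to\mathbb{R}_+$ whose extension by $0$ on $(-\infty,0)$ is $C^1$ on $\mathbb{R}$. $\mathcal{D}_{\mathrm{density}}$: the set of $\rho\in\mathcal{C}^1(\mathbb{R}_+,\mathbb{R}_+)^I$ with $\sum_{i=1}^I2i\rho_i(u)<1$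 for all $u\ge0$ and $\sum_{i=1}^Ii\sup_u\frac{\rho_i(u)}{1-\sum_{j=1}^I2(i\wedge j)\rho_j(u)}<\frac12$. *)

(* Defs.v *)
From HB Require Import structures.
From mathcomp Require Import all_boot all_order all_algebra.
From mathcomp Require Import all_classical all_reals all_analysis.
Set Implicit Arguments. Unset Strict Implicit. Unset Printing Implicit Defensive.
Import Order.TTheory GRing.Theory Num.Theory.
Import numFieldNormedType.Exports.
Local Open Scope classical_set_scope.
Local Open Scope ring_scope.

Section Defs.
Variable R : realType.

(* functions R_+ -> R are represented as R -> R; only values on [0,oo) matter *)
Definition Rplus : set R := [set x | 0 <= x].

Definition ext0 (f : R -> R) : R -> R := fun x => if x < 0 then 0 else f x.

Fixpoint Cq_R (q : nat) (g : R -> R) : Prop :=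
  match q with
  | 0%N => continuous g
  | q'.+1 => (forall x, derivable g x 1) /\ Cq_R q' (derive1 g)
  end.

Definition isC (f : R -> R) : Prop :=
  {within Rplus, continuous f} /\ (forall x, 0 <= x -> 0 <= f x) /\
  f 0 = 0 /\ (forall x y, 0 <= x -> x <= y -> f x <= f y).

Definition isCup (f : R -> R) : Prop :=
  isC f /\ (forall x y, 0 <= x -> x < y -> f x < f y) /\
  (f x @[x --> +oo] --> +oo).

Definition isCq (q : nat) (f : R -> R) : Prop := isC f /\ Cq_R q (ext0 f).

(* psi is indexed by i = 1..I (values of psi at other indices are irrelevant) *)
Definition phi (I : nat) (psi : nat -> R -> R) (i : nat) (u : R) : R :=
  u - \sum_(1 <= j < I.+1) 2 * (minn i j)%:R * psi j u.

Definition difquot_sup (I : nat) (psi : nat -> R -> R) (i : nat) : \bar R :=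
  ereal_sup [set y : \bar R | exists u1 u2, 0 <= u1 /\ 0 <= u2 /\ u1 != u2 /\
      y = ((psi i u1 - psi i u2) / (phi I psi i u1 - phi I psi i u2))%:E].

Definition inD (I : nat) (psi : nat -> R -> R) : Prop :=
  (forall i, (1 <= i <= I)%N -> isC (psi i)) /\
  isCup (phi I psi I) /\
  (\sum_(1 <= i < I.+1) (i%:R)%:E * difquot_sup I psi i < (1 / 2)%:E)%E.

Definition inD2 (I : nat) (psi : nat -> R -> R) : Prop :=
  inD I psi /\ (forall i, (1 <= i <= I)%N -> isCq 2 (psi i)).

(* C^1(R_+,R_+): values >= 0 on R_+ and the extension by 0 is C^1 on R *)
Definition isC1plus (f : R -> R) : Prop :=
  (forall x, 0 <= x -> 0 <= f x) /\ Cq_R 1 (ext0 f).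

Definition density_sup (I : nat) (rho : nat -> R -> R) (i : nat) : \bar R :=
  ereal_sup [set y : \bar R | exists u, 0 <= u /\
      y = (rho i u / (1 - \sum_(1 <= j < I.+1) 2 * (minn i j)%:R * rho j u))%:E].

Definition inDdensity (I : nat) (rho : nat -> R -> R) : Prop :=
  (forall i, (1 <= i <= I)%N -> isC1plus (rho i)) /\
  (forall u, 0 <= u -> \sum_(1 <= i < I.+1) 2 * i%:R * rho i u < 1) /\
  (\sum_(1 <= i < I.+1) (i%:R)%:E * density_sup I rho i < (1 / 2)%:E)%E.

End Defs.

(* Main.v *)
Require Import Defs.
From HB Require Import structures.
From mathcomp Require Import all_boot all_order all_algebra.
From mathcomp Require Import all_classical all_reals all_analysis.
From mathcomp Require Import ring lra.
Import Order.TTheory GRing.Theory Num.Theory.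
Import numFieldNormedType.Exports.
Local Open Scope classical_set_scope.
Local Open Scope ring_scope.
Set Implicit Arguments. Unset Strict Implicit. Unset Printing Implicit Defensive.

Section Helpers.
Variable R : realType.
Notation mu := (@lebesgue_measure R).

Lemma ndecr_of_deriv (f df : R -> R) : (forall x : R, is_derive x (1:R) f (df x)) ->
  (forall x, 0 <= df x) -> forall x y, x <= y -> f x <= f y.
Proof.
move=> fd dfge x y xy.
have dv : forall z : R, derivable f z 1 by move=> z; have := fd z => H; exact: ex_derive.
apply: (@ger0_derive1_ndecr R f x y) => //.
- by move=> z _; have := fd z => H; rewrite derive1E derive_val.
- by apply: (@derivable_within_continuous R R f `[x, y]) => z _; exact: dv.
Qed.

Lemma deriv_ge0_of_ndecr (f : R -> R) (x : R) : derivable f x 1 ->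
  (forall a b, a <= b -> f a <= f b) -> 0 <= derive1 f x.
Proof.
move=> df ndf; rewrite derive1E /derive.
apply: limr_ge.
  exact: df.
near=> h.
have h0 : h != 0 by near: h; exact: nbhs_dnbhs_neq.
have -> : h%:A = h :> R by rewrite /GRing.scale/= mulr1.
move: h0; rewrite neq_lt => /orP[h0|h0].
- rewrite /= nmulr_rge0 ?invr_lt0// subr_le0; apply: ndf.
  by rewrite gerDr ltW.
- rewrite /= pmulr_rge0 ?invr_gt0// subr_ge0; apply: ndf.
  have : (x <= h + x :> R) by rewrite lerDr ltW.
  done.
Unshelve. all: by end_near. Qed.

Lemma Rplus_itv : @Rplus R = [set` `[0, +oo[%R].
Proof. by apply/seteqP; split => x /=; rewrite in_itv/= andbT. Qed.

Lemma within_split (f : R -> R) : {within @Rplus R, continuous f} ->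
  {in `]0, +oo[, continuous f} /\ f x @[x --> 0^'+] --> f 0.
Proof. by rewrite Rplus_itv => /continuous_within_itvcyP. Qed.

Lemma FTCpos (f : R -> R) : {within @Rplus R, continuous f} -> forall x : R, 0 < x ->
  derivable (fun y : R => Rintegral mu `[0, y] f) x 1 /\
  derive1 (fun y : R => Rintegral mu `[0, y] f) x = f x.
Proof.
move=> cf x x0.
have [cin _] := within_split cf.
apply: (@continuous_FTC1_closed R f 0 x (x + 1)) => //.
- by rewrite ltrDl.
- apply: continuous_compact_integrable; first exact: segment_compact.
  apply: continuous_subspaceW cf => y /=; rewrite in_itv/= => /andP[].
  by [].
- by apply: cin; rewrite in_itv/= x0.
Qed.

Lemma zero_left (g : R -> R) : {for 0, continuous g} ->
  (forall x, x < 0 -> g x = 0) -> g 0 = 0.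
Proof.
move=> gc g0.
have H1 := cvg_at_left_filter gc.
have H2 : g x @[x --> 0^'-] --> 0.
  apply: cvg_near_cst; near=> x; apply: g0; near: x; exact: nbhs_left_lt.
exact: (cvg_unique _ H1 H2).
Unshelve. all: by end_near. Qed.

Lemma same_right (g h : R -> R) (a b : R) : g x @[x --> 0^'+] --> a ->
  h x @[x --> 0^'+] --> b -> (forall x, 0 < x -> g x = h x) -> a = b.
Proof.
move=> ga hb gh.
have : g x @[x --> 0^'+] --> b.
  apply: cvg_trans hb; apply: near_eq_cvg; near=> x.
  have x0 : 0 < x by near: x; exact: nbhs_right_gt.
  by rewrite /= gh.
move=> gb.
exact: (cvg_unique _ ga gb).
Unshelve. all: by end_near. Qed.
Lemma Psi_pos (f P : R -> R) : {within @Rplus R, continuous f} ->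
  (forall u, 0 <= u -> P u = Rintegral mu `[0, u] f) ->
  forall x : R, 0 < x -> derivable (ext0 P) x 1 /\ derive1 (ext0 P) x = f x.
Proof.
move=> cf Pd x x0.
have [d1 d2] := FTCpos cf x0.
have nr : \forall y \near x, (fun y : R => Rintegral mu `[0, y] f) y = ext0 P y.
  near=> y; have y0 : 0 < y by near: y; exact: lt_nbhsr.
  by rewrite /ext0 ltNge (ltW y0)/= Pd// ltW.
split; first exact: near_eq_derivable nr d1.
by rewrite derive1E -(near_eq_derive _ nr) -derive1E d2.
Unshelve. all: by end_near. Qed.

Lemma Psi_neg (P : R -> R) (x : R) : x < 0 ->
  derivable (ext0 P) x 1 /\ derive1 (ext0 P) x = 0.
Proof.
move=> x0.
have nr : \forall y \near x, cst (0:R) y = ext0 P y.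
  near=> y; have y0 : y < 0 by near: y; exact: lt_nbhsl.
  by rewrite /ext0 y0.
split; first exact: near_eq_derivable nr (derivable_cst 0 x 1).
by rewrite derive1E -(near_eq_derive _ nr) derive_cst.
Unshelve. all: by end_near. Qed.
Lemma Psi_zero (f P : R -> R) : continuous (ext0 f) ->
  (forall u, 0 <= u -> P u = Rintegral mu `[0, u] f) ->
  derivable (ext0 P) 0 1 /\ derive1 (ext0 P) 0 = ext0 f 0.
Proof.
move=> cr Pd.
set r := ext0 f.
have r0 : r 0 = 0.
  by apply: zero_left; [exact: cr | move=> x x0; rewrite /r/ext0 x0].
have rneg : forall t : R, t <= 0 -> r t = 0.
  move=> t; rewrite le_eqVlt => /predU1P[->//|t0]; by rewrite /r/ext0 t0.
have intr : forall a b : R, mu.-integrable `[a, b] (EFin \o r).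
  move=> a b; apply: continuous_compact_integrable; first exact: segment_compact.
  exact: continuous_subspaceT.
have m10 : (-1 : R) < 0 by rewrite ltrN10.
have [d1 d2] := @continuous_FTC1_closed R r (-1) 0 1 ltr01 (intr _ _) m10 (cr 0).
set F := (fun x : R => _) in d1 d2.
have nr : \forall y \near 0, F y = ext0 P y.
  near=> y; have ym : -1 < y by near: y; exact: lt_nbhsr.
  rewrite /F /ext0; case: ltP => y0.
  - rewrite (@eq_Rintegral _ _ _ mu _ (fun _ => 0)); last first.
      move=> t; rewrite inE/= in_itv/= => /andP[_ ty]; apply: rneg.
      exact: (le_trans ty (ltW y0)).
    by rewrite Rintegral_cst// mul0r.
  - have := @Rintegral_itvB _ r (BLeft (-1)) (BRight y) 0 (intr _ _).
    rewrite !bnd_simp (ltW m10) y0 => /(_ isT isT).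
    rewrite (@eq_Rintegral _ _ _ mu [set` Interval (BLeft (-1)) (BRight 0)] (fun _ => 0)); last first.
      move=> t; rewrite inE/= in_itv/= => /andP[_ ty]; exact: rneg.
    rewrite Rintegral_cst// mul0r subr0 => ->.
    rewrite Rintegral_itv_obnd_cbnd; last first.
      by apply: integrableS (intr 0 y) => //; exact: subset_itv_oc_cc.
    rewrite Pd//; apply: eq_Rintegral => t; rewrite inE/= in_itv/= => /andP[t0 _].
    by rewrite /r/ext0 ltNge t0.
split; first exact: near_eq_derivable nr d1.
by rewrite derive1E -(near_eq_derive _ nr) -derive1E d2.
Unshelve. all: by end_near. Qed.
Lemma is_derive_sumseq (s : seq nat) (c : nat -> R) (G : nat -> R -> R) (dG : nat -> R) (x : R) :
  (forall j, j \in s -> is_derive x (1:R) (G j) (dG j)) ->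
  is_derive x (1:R) (fun y => \sum_(j <- s) c j * G j y) (\sum_(j <- s) c j * dG j).
Proof.
elim: s => [|a s IH] H.
  have -> : (fun y => \sum_(j <- [::]) c j * G j y) = cst 0.
    by apply/funext => y; rewrite big_nil.
  rewrite big_nil; exact: is_derive_cst.
have -> : (fun y => \sum_(j <- a :: s) c j * G j y) =
   (fun y => c a * G a y) + (fun y => \sum_(j <- s) c j * G j y).
  by apply/funext => y; rewrite big_cons.
rewrite big_cons; apply: is_deriveD.
  have := H a (mem_head _ _) => Ha.
  exact: (is_deriveZ (c a) Ha).
by apply: IH => j js; apply: H; rewrite in_cons js orbT.
Qed.

Lemma is_derive_phi (I : nat) (Ps : nat -> R -> R) (r : nat -> R -> R) (i : nat) (x : R) :
  (forall j, (1 <= j <= I)%N -> is_derive x (1:R) (Ps j) (r j x)) ->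
  is_derive x (1:R) (phi I Ps i) (1 - \sum_(1 <= j < I.+1) 2 * (minn i j)%:R * r j x).
Proof.
move=> H.
have H2 := @is_derive_sumseq (index_iota 1 I.+1) (fun j => 2 * (minn i j)%:R) Ps (fun j => r j x) x.
have /H2 {}H2 : forall j, j \in index_iota 1 I.+1 -> is_derive x (1:R) (Ps j) (r j x).
  by move=> j; rewrite mem_index_iota ltnS => /H.
have := is_deriveB (is_derive_id x (1:R)) H2.
by [].
Qed.

Lemma der_cont (f : R -> R) : (forall x : R, derivable f x 1) -> continuous f.
Proof. move=> df x; apply: differentiable_continuous; exact/derivable1_diffP. Qed.

Lemma fin_terms (I : nat) (s : nat -> \bar R) (a : R) :
  (forall i, (1 <= i <= I)%N -> (0 <= s i)%E) ->
  (\sum_(1 <= i < I.+1) (i%:R)%:E * s i < a%:E)%E ->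
  (forall i, (1 <= i <= I)%N -> s i = (fine (s i))%:E) /\
  \sum_(1 <= i < I.+1) i%:R * fine (s i) < a.
Proof.
move=> s0 Hs.
have fin : forall i, (1 <= i <= I)%N -> s i = (fine (s i))%:E.
  move=> i hi.
  have le : ((i%:R)%:E * s i <= \sum_(1 <= j < I.+1) (j%:R)%:E * s j)%E.
    rewrite (bigD1_seq i) ?mem_index_iota ?ltnS ?iota_uniq //=.
    apply: leeDl; rewrite big_seq_cond; apply: sume_ge0 => j /andP[jin _].
    rewrite mem_index_iota ltnS in jin.
    by apply: mule_ge0; [rewrite lee_fin ler0n | exact: s0].
  move: (s0 i hi) le; case: (s i) => [r| |] //= _.
  rewrite gt0_muley; last by rewrite lte_fin ltr0n; case/andP: hi.
  move=> le; have := le_lt_trans le Hs.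
  by rewrite ltNge leey.
split => //.
rewrite -lte_fin -sumEFin; apply: le_lt_trans Hs; rewrite le_eqVlt; apply/orP; left; apply/eqP.
by apply: eq_big_nat => i hi; rewrite EFinM -fin.
Qed.

Lemma sum_le_fin (I : nat) (a : nat -> \bar R) (t : nat -> R) :
  (forall i, (1 <= i <= I)%N -> (a i <= (t i)%:E)%E) ->
  (\sum_(1 <= i < I.+1) (i%:R)%:E * a i <= (\sum_(1 <= i < I.+1) i%:R * t i)%:E)%E.
Proof.
move=> H; rewrite -sumEFin big_seq_cond [X in (_ <= X)%E]big_seq_cond.
apply: lee_sum => i /andP[hi _]; rewrite mem_index_iota ltnS in hi.
by rewrite EFinM; apply: lee_wpmul2l; [rewrite lee_fin ler0n | exact: H].
Qed.

Definition Dd (I : nat) (rho : nat -> R -> R) (i : nat) (u : R) :=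
  1 - \sum_(1 <= j < I.+1) 2 * (minn i j)%:R * rho j u.

Lemma DI_eq I rho u : Dd I rho I u = 1 - \sum_(1 <= j < I.+1) 2 * j%:R * rho j u.
Proof.
rewrite /Dd; congr (_ - _); apply: eq_big_nat => j; rewrite ltnS => /andP[_ hj].
by rewrite (minn_idPr hj).
Qed.
Lemma D_ge_DI I rho i u : (forall j, (1 <= j <= I)%N -> 0 <= rho j u) ->
  (i <= I)%N -> Dd I rho I u <= Dd I rho i u.
Proof.
move=> r0 iI; rewrite /Dd; apply: lerB => //; apply: ler_sum_nat => j; rewrite ltnS => hj.
apply: ler_wpM2r; first exact: r0.
apply: ler_wpM2l => //; rewrite ler_nat leq_min geq_minr andbT.
exact: leq_trans (geq_minl _ _) iI.
Qed.

Lemma D_le1 I rho i u : (forall j, (1 <= j <= I)%N -> 0 <= rho j u) ->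
  Dd I rho i u <= 1.
Proof.
move=> r0; rewrite /Dd lerBlDr lerDl big_seq_cond; apply: sumr_ge0 => j /andP[hj _].
rewrite mem_index_iota ltnS in hj.
by rewrite mulr_ge0 // r0.
Qed.

Lemma sum_bound I rho (t : nat -> R) u : (forall j, (1 <= j <= I)%N -> 0 <= rho j u) ->
  (forall j, (1 <= j <= I)%N -> 0 <= t j) ->
  (forall j, (1 <= j <= I)%N -> rho j u <= t j * Dd I rho j u) ->
  \sum_(1 <= j < I.+1) 2 * j%:R * rho j u <= 2 * \sum_(1 <= j < I.+1) j%:R * t j.
Proof.
move=> r0 t0 H; rewrite mulr_sumr; apply: ler_sum_nat => j; rewrite ltnS => hj.
rewrite mulrA; apply: ler_wpM2l; first by rewrite mulr_ge0.
apply: (le_trans (H j hj)); rewrite -[X in _ <= X]mulr1.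
by apply: ler_wpM2l; [exact: t0 | exact: D_le1].
Qed.

Lemma lin_der (c z : R) : is_derive z (1:R) (fun w : R => c * w) c.
Proof.
have := is_deriveZ c (is_derive_id z (1:R)).
have -> : (c \*: (@id R)) = (fun w : R => c * w) by apply/funext.
by rewrite [X in is_derive _ _ _ X]mulr1.
Qed.
Lemma lin_lower (f df : R -> R) (c : R) : (forall x : R, is_derive x (1:R) f (df x)) ->
  (forall x, c <= df x) -> forall x y, x <= y -> f x + c * (y - x) <= f y.
Proof.
move=> fd dfc x y xy.
have H : forall z : R, is_derive z (1:R) (f - (fun w => c * w)) (df z - c).
  move=> z; have := fd z => ?; have := lin_der c z => ?; exact: is_deriveB.
have H2 : forall z, 0 <= df z - c by move=> z; rewrite subr_ge0.
have := ndecr_of_deriv H H2 xy.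
move=> h; have h2 : f x - c * x <= f y - c * y := h.
lra.
Qed.
Lemma phi_ext0_pos I (psi : nat -> R -> R) i x : 0 <= x ->
  phi I (fun j => ext0 (psi j)) i x = phi I psi i x.
Proof.
move=> x0; rewrite /phi; congr (_ - _); apply: eq_bigr => j _.
by rewrite /ext0 ltNge x0.
Qed.
Lemma phi_ext0_neg I (psi : nat -> R -> R) i x : x < 0 ->
  phi I (fun j => ext0 (psi j)) i x = x.
Proof.
move=> x0; rewrite /phi big1 ?subr0// => j _.
by rewrite /ext0 x0 mulr0.
Qed.
Lemma Dd_ext0_pos I (rho : nat -> R -> R) i x : 0 <= x ->
  Dd I (fun j => ext0 (rho j)) i x = Dd I rho i x.
Proof.
move=> x0; rewrite /Dd; congr (_ - _); apply: eq_bigr => j _.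
by rewrite /ext0 ltNge x0.
Qed.
Lemma Dd_ext0_neg I (rho : nat -> R -> R) i x : x < 0 ->
  Dd I (fun j => ext0 (rho j)) i x = 1.
Proof.
move=> x0; rewrite /Dd big1 ?subr0// => j _.
by rewrite /ext0 x0 mulr0.
Qed.
Lemma DER_of (rj pj : R -> R) : {within @Rplus R, continuous rj} ->
  (forall u, 0 <= u -> pj u = Rintegral mu `[0, u] rj) ->
  derivable (ext0 pj) 0 1 -> derive1 (ext0 pj) 0 = ext0 rj 0 ->
  forall x : R, is_derive x (1:R) (ext0 pj) (ext0 rj x).
Proof.
move=> cf Pd d0 e0 x.
suff [dx ex] : derivable (ext0 pj) x 1 /\ derive1 (ext0 pj) x = ext0 rj x.
  by have := derivableP dx; rewrite -derive1E ex.
case: (ltgtP x 0) => [x0|x0|->]; last by [].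
- by have [d e] := Psi_neg pj x0; split => //; rewrite e /ext0 x0.
- by have [d e] := Psi_pos cf Pd x0; split => //; rewrite e /ext0 ltNge (ltW x0).
Qed.
Lemma is_derive_comb (f g : R -> R) (df dg a : R) (x : R) :
  is_derive x (1:R) f df -> is_derive x (1:R) g dg ->
  is_derive x (1:R) (fun z => a * f z - g z) (a * df - dg).
Proof.
move=> hf hg.
have hz := is_deriveZ a hf.
have -> : (fun z => a * f z - g z) = a \*: f - g by apply/funext.
exact: is_deriveB.
Qed.
Lemma dir1 (I : nat) (hI : (0 < I)%N) (rho : nat -> R -> R)
  (rho_cont : forall i, (1 <= i <= I)%N -> {within @Rplus R, continuous (rho i)})
  (rho_ge0 : forall i, (1 <= i <= I)%N -> forall u, 0 <= u -> 0 <= rho i u)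
  (psi : nat -> R -> R)
  (psi_def : forall i u, (1 <= i <= I)%N -> 0 <= u ->
     psi i u = Rintegral lebesgue_measure `[0, u] (rho i)) :
  inDdensity I rho -> inD2 I psi.
Proof.
case=> HC1 [Hlt Hsum].
set Ps := fun j => ext0 (psi j).
set r := fun j => ext0 (rho j).
have r0 : forall j, (1 <= j <= I)%N -> forall x, 0 <= r j x.
  move=> j hj x; rewrite /r/ext0; case: ltP => // x0; exact: rho_ge0.
have rc : forall j, (1 <= j <= I)%N -> continuous (r j).
  move=> j hj; apply: der_cont; exact: (HC1 j hj).2.1.
have DER : forall j, (1 <= j <= I)%N -> forall x : R, is_derive x (1:R) (Ps j) (r j x).
  move=> j hj; have [d0 e0] := Psi_zero (rc j hj) (fun u => psi_def j u hj).
  exact: DER_of (rho_cont j hj) (fun u => psi_def j u hj) d0 e0.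
have DIpos : forall u, 0 <= u -> 0 < Dd I rho I u.
  by move=> u u0; rewrite DI_eq subr_gt0; exact: Hlt.
have Dpos : forall i, (1 <= i <= I)%N -> forall u, 0 <= u -> 0 < Dd I rho i u.
  move=> i hi u u0; apply: (lt_le_trans (DIpos u u0)); apply: D_ge_DI.
    by move=> j hj; exact: rho_ge0.
  by case/andP: hi.
set s := density_sup I rho.
have s0 : forall i, (1 <= i <= I)%N -> (0 <= s i)%E.
  move=> i hi; apply: (@le_trans _ _ (rho i 0 / Dd I rho i 0)%:E).
    by rewrite lee_fin divr_ge0 //; [exact: rho_ge0 | exact/ltW/Dpos].
  by rewrite /s /density_sup; apply: ereal_sup_ubound; exists 0; split.
have [sfin Hsum'] := fin_terms s0 Hsum.
set t := fun i => fine (s i).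
have t0 : forall i, (1 <= i <= I)%N -> 0 <= t i.
  by move=> i hi; rewrite -lee_fin /t -sfin // s0.
have rho_le : forall i, (1 <= i <= I)%N -> forall u, 0 <= u -> rho i u <= t i * Dd I rho i u.
  move=> i hi u u0; rewrite -ler_pdivrMr; last exact: Dpos.
  rewrite -lee_fin /t -sfin // /s /density_sup; apply: ereal_sup_ubound.
  by exists u; split.
set c := 1 - 2 * \sum_(1 <= i < I.+1) i%:R * t i.
have c_pos : 0 < c by rewrite /c; lra.
have St0 : 0 <= \sum_(1 <= i < I.+1) i%:R * t i.
  rewrite big_seq_cond; apply: sumr_ge0 => j /andP[hj _].
  by rewrite mem_index_iota ltnS in hj; rewrite mulr_ge0 ?t0.
have c1 : c <= 1 by rewrite /c; lra.
have DIc : forall u, 0 <= u -> c <= Dd I rho I u.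
  move=> u u0; rewrite DI_eq /c; apply: lerB => //; apply: sum_bound.
  - by move=> j hj; exact: rho_ge0.
  - exact: t0.
  - by move=> j hj; exact: rho_le.
have Ddc : forall i, (1 <= i <= I)%N -> forall x, c <= Dd I r i x.
  move=> i hi x; case: (ltP x 0) => x0; first by rewrite Dd_ext0_neg.
  rewrite Dd_ext0_pos //; apply: (le_trans (DIc x x0)); apply: D_ge_DI.
    by move=> j hj; exact: rho_ge0.
  by case/andP: hi.
have PhiD : forall i (x : R), is_derive x (1:R) (phi I Ps i) (Dd I r i x).
  by move=> i x; apply: is_derive_phi => j hj; exact: DER.
have Phi_low : forall i, (1 <= i <= I)%N -> forall x y, x <= y ->
    phi I Ps i x + c * (y - x) <= phi I Ps i y.
  by move=> i hi; apply: lin_lower (PhiD i) (Ddc i hi).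
have Ps_nd : forall j, (1 <= j <= I)%N -> forall x y, x <= y -> Ps j x <= Ps j y.
  by move=> j hj; apply: ndecr_of_deriv (DER j hj) (r0 j hj).
have psi00 : forall j, (1 <= j <= I)%N -> psi j 0 = 0.
  by move=> j hj; rewrite psi_def // set_itv1 Rintegral_set1.
have Ps_cont : forall j, (1 <= j <= I)%N -> continuous (Ps j).
  move=> j hj; apply: der_cont => x; have := DER j hj x => ?; exact: ex_derive.
have isCpsi : forall j, (1 <= j <= I)%N -> isC (psi j).
  move=> j hj; split; [|split; [|split]].
  - apply: (@subspace_eq_continuous _ _ _ (Ps j)); last exact: continuous_subspaceT (Ps_cont j hj).
    by move=> x; rewrite inE /= => x0; rewrite /Ps/ext0 ltNge x0.
  - move=> x x0; have := Ps_nd j hj 0 x x0.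
    by rewrite /Ps/ext0 ltxx ltNge x0 /= psi00.
  - exact: psi00.
  - move=> x y x0 xy; have := Ps_nd j hj x y xy.
    by rewrite /Ps/ext0 ltNge x0 ltNge (le_trans x0 xy).
have der1 : forall j, (1 <= j <= I)%N -> derive1 (Ps j) = r j.
  move=> j hj; apply/funext => x; have := DER j hj x => ?.
  by rewrite derive1E derive_val.
have hII : (1 <= I <= I)%N by rewrite hI leqnn.
have phi0 : forall i, phi I psi i 0 = 0.
  move=> i; rewrite /phi big_nat_cond big1 ?subr0 // => j /andP[hj _].
  by rewrite psi00 ?mulr0 //; rewrite ltnS in hj.
split; last first.
  move=> i hi; split; first exact: isCpsi.
  split; first by move=> x; have := DER i hi x => ?; exact: ex_derive.
  rewrite -/(Ps i) der1 //; exact: (HC1 i hi).2.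
split; first by move=> i hi; exact: isCpsi.
split.
  have PhiC : continuous (phi I Ps I).
    apply: der_cont => x; have := PhiD I x => ?; exact: ex_derive.
  have low : forall x y, 0 <= x -> x <= y -> phi I psi I x + c * (y - x) <= phi I psi I y.
    move=> x y x0 xy; have := Phi_low I hII x y xy.
    by rewrite !phi_ext0_pos // (le_trans x0 xy).
  split; [split; [|split; [|split]] | split].
  - apply: (@subspace_eq_continuous _ _ _ (phi I Ps I)); last exact: continuous_subspaceT.
    by move=> x; rewrite inE /= => x0; rewrite phi_ext0_pos.
  - move=> x x0; have := low 0 x (lexx 0) x0; rewrite phi0 subr0 add0r.
    by apply: le_trans; rewrite mulr_ge0 // ltW.
  - exact: phi0.
  - move=> x y x0 xy; have := low x y x0 xy.
    have : 0 <= c * (y - x) by apply: mulr_ge0; [exact: ltW | rewrite subr_ge0].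
    lra.
  - move=> x y x0 xy; have := low x y x0 (ltW xy).
    have : 0 < c * (y - x) by apply: mulr_gt0 => //; rewrite subr_gt0.
    lra.
  - apply/cvgryPge => A; near=> x.
    have x0 : 0 <= x by near: x; apply: nbhs_pinfty_ge; rewrite num_real.
    have xA : A / c <= x by near: x; apply: nbhs_pinfty_ge; rewrite num_real.
    have := low 0 x (lexx 0) x0; rewrite phi0 subr0 add0r.
    have : A <= c * x by rewrite mulrC -ler_pdivrMr.
    lra.
have ratio : forall i, (1 <= i <= I)%N -> forall x y, 0 <= x -> x < y ->
    (psi i y - psi i x) / (phi I psi i y - phi I psi i x) <= t i.
  move=> i hi x y x0 xy.
  have y0 : 0 <= y by apply: (le_trans x0); exact: ltW.
  have den : c * (y - x) <= phi I psi i y - phi I psi i x.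
    have := Phi_low i hi x y (ltW xy); rewrite !phi_ext0_pos //; lra.
  have denp : 0 < phi I psi i y - phi I psi i x.
    by apply: lt_le_trans den; apply: mulr_gt0 => //; rewrite subr_gt0.
  rewrite ler_pdivrMr //.
  have KD : forall z : R, is_derive z (1:R) (fun w => t i * phi I Ps i w - Ps i w)
      (t i * Dd I r i z - r i z).
    move=> z; have := PhiD i z => ?; have := DER i hi z => ?; exact: is_derive_comb.
  have Kge : forall z, 0 <= t i * Dd I r i z - r i z.
    move=> z; rewrite subr_ge0; case: (ltP z 0) => z0.
      by rewrite Dd_ext0_neg // mulr1 /r /ext0 z0 t0.
    by rewrite Dd_ext0_pos // /r /ext0 ltNge z0 /=; exact: rho_le.
  have := ndecr_of_deriv KD Kge (ltW xy).
  rewrite !phi_ext0_pos // /Ps /ext0 !ltNge x0 y0 /=.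
  lra.
apply: le_lt_trans (sum_le_fin (t := t) _) _; last by rewrite lte_fin.
move=> i hi; apply/ereal_supP => _ [u1 [u2 [u10 [u20 [neq ->]]]]]; rewrite lee_fin.
move: neq; rewrite neq_lt => /orP[u12|u21].
  rewrite -[psi i u1 - _]opprB -[phi I psi i u1 - _]opprB invrN mulrNN.
  exact: ratio.
exact: ratio.
Unshelve. all: by end_near. Qed.
Lemma dir2 (I : nat) (hI : (0 < I)%N) (rho : nat -> R -> R)
  (rho_cont : forall i, (1 <= i <= I)%N -> {within @Rplus R, continuous (rho i)})
  (rho_ge0 : forall i, (1 <= i <= I)%N -> forall u, 0 <= u -> 0 <= rho i u)
  (psi : nat -> R -> R)
  (psi_def : forall i u, (1 <= i <= I)%N -> 0 <= u ->
     psi i u = Rintegral lebesgue_measure `[0, u] (rho i)) :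
  inD2 I psi -> inDdensity I rho.
Proof.
case=> -[HC [Hup Hsum]] HCq.
set Ps := fun j => ext0 (psi j).
set r := fun j => ext0 (rho j).
have r0 : forall j, (1 <= j <= I)%N -> forall x, 0 <= r j x.
  move=> j hj x; rewrite /r/ext0; case: ltP => // x0; exact: rho_ge0.
have DER : forall j, (1 <= j <= I)%N -> forall x : R, is_derive x (1:R) (Ps j) (r j x).
  move=> j hj.
  have [dPs [dPs' _]] := (HCq j hj).2.
  set g := derive1 (ext0 (psi j)) in dPs'.
  have gc : continuous g by exact: der_cont.
  have g0 : g 0 = 0.
    by apply: zero_left; [exact: gc | move=> x x0; exact: (Psi_neg (psi j) x0).2].
  have rho00 : rho j 0 = g 0.
    apply: (same_right (within_split (rho_cont j hj)).2 (cvg_at_right_filter (gc 0))).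
    by move=> x x0; symmetry; exact: (Psi_pos (rho_cont j hj) (fun u => psi_def j u hj) x0).2.
  apply: DER_of (rho_cont j hj) (fun u => psi_def j u hj) (dPs 0) _.
  by rewrite /ext0 ltxx rho00.
have der1 : forall j, (1 <= j <= I)%N -> derive1 (Ps j) = r j.
  move=> j hj; apply/funext => x; have := DER j hj x => ?.
  by rewrite derive1E derive_val.
have isC1 : forall j, (1 <= j <= I)%N -> isC1plus (rho j).
  move=> j hj; split; first exact: rho_ge0.
  have := (HCq j hj).2 => -[_ H]; rewrite -/(Ps j) der1 // in H.
have psi00 : forall j, (1 <= j <= I)%N -> psi j 0 = 0.
  by move=> j hj; exact: (HC j hj).2.2.1.
have psi_nd : forall j, (1 <= j <= I)%N -> forall x y, 0 <= x -> x <= y -> psi j x <= psi j y.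
  by move=> j hj; exact: (HC j hj).2.2.2.
have phi_cmp : forall i, (1 <= i <= I)%N -> forall x y, 0 <= x -> x <= y ->
    phi I psi I y - phi I psi I x <= phi I psi i y - phi I psi i x.
  move=> i hi x y x0 xy.
  have key : \sum_(1 <= j < I.+1) 2 * (minn i j)%:R * psi j y -
             \sum_(1 <= j < I.+1) 2 * (minn i j)%:R * psi j x <=
             \sum_(1 <= j < I.+1) 2 * (minn I j)%:R * psi j y -
             \sum_(1 <= j < I.+1) 2 * (minn I j)%:R * psi j x.
    rewrite -!sumrB; apply: ler_sum_nat => j; rewrite ltnS => hj.
    rewrite -!mulrBr; apply: ler_wpM2r; first by rewrite subr_ge0; exact: psi_nd.
    apply: ler_wpM2l => //; rewrite ler_nat leq_min geq_minr andbT.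
    by case/andP: hi => _ hi; exact: leq_trans (geq_minl _ _) hi.
  rewrite /phi; lra.
have phi_pos : forall i, (1 <= i <= I)%N -> forall x y, 0 <= x -> x < y ->
    0 < phi I psi i y - phi I psi i x.
  move=> i hi x y x0 xy; apply: lt_le_trans (phi_cmp i hi x y x0 (ltW xy)).
  by rewrite subr_gt0; exact: Hup.2.1.
set d := difquot_sup I psi.
have d0 : forall i, (1 <= i <= I)%N -> (0 <= d i)%E.
  move=> i hi; apply: (@le_trans _ _ ((psi i 1 - psi i 0) / (phi I psi i 1 - phi I psi i 0))%:E).
    rewrite lee_fin divr_ge0 //; first by rewrite subr_ge0; exact: psi_nd.
    exact/ltW/phi_pos.
  rewrite /d /difquot_sup; apply: ereal_sup_ubound; exists 1, 0.
  by split => //; split => //; split => //; rewrite oner_neq0.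
have [dfin Hsum'] := fin_terms d0 Hsum.
set t := fun i => fine (d i).
have t0 : forall i, (1 <= i <= I)%N -> 0 <= t i.
  by move=> i hi; rewrite -lee_fin /t -dfin // d0.
have diffle : forall i, (1 <= i <= I)%N -> forall x y, 0 <= x -> x < y ->
    psi i y - psi i x <= t i * (phi I psi i y - phi I psi i x).
  move=> i hi x y x0 xy; rewrite -ler_pdivrMr; last exact: phi_pos.
  rewrite -lee_fin /t -dfin // /d /difquot_sup; apply: ereal_sup_ubound.
  exists y, x; split; first exact: (le_trans x0 (ltW xy)).
  by split => //; split => //; rewrite gt_eqF.
have Ps_npos : forall j, (1 <= j <= I)%N -> forall z, z <= 0 -> Ps j z = 0.
  move=> j hj z; rewrite le_eqVlt => /predU1P[->|z0].
    by rewrite /Ps /ext0 ltxx psi00.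
  by rewrite /Ps /ext0 z0.
have Phi_npos : forall i z, z <= 0 -> phi I Ps i z = z.
  move=> i z z0; rewrite /phi big_nat_cond big1 ?subr0 // => j /andP[hj _].
  by rewrite Ps_npos ?mulr0 //; rewrite ltnS in hj.
have Knd : forall i, (1 <= i <= I)%N -> forall a b, a <= b ->
    t i * phi I Ps i a - Ps i a <= t i * phi I Ps i b - Ps i b.
  move=> i hi.
  have Kneg : forall z, z <= 0 -> t i * phi I Ps i z - Ps i z = t i * z.
    by move=> z z0; rewrite Phi_npos // Ps_npos // subr0.
  have Kpos : forall a b, 0 <= a -> a <= b ->
      t i * phi I Ps i a - Ps i a <= t i * phi I Ps i b - Ps i b.
    move=> a b a0; rewrite le_eqVlt => /predU1P[->//|ab].
    have b0 : 0 <= b by apply: (le_trans a0); exact: ltW.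
    rewrite !phi_ext0_pos // /Ps /ext0 !ltNge a0 b0 /=.
    have := diffle i hi a b a0 ab; lra.
  move=> a b ab; case: (leP 0 a) => a0; first exact: Kpos.
  case: (leP b 0) => b0.
    by rewrite !Kneg //; [apply: ler_wpM2l; [exact: t0|] | exact: ltW].
  apply: le_trans (Kpos 0 b (lexx 0) (ltW b0)).
  rewrite Kneg ?(ltW a0) // Kneg // mulr0.
  by apply: mulr_ge0_le0; [exact: t0 | exact: ltW].
have PhiD : forall i (x : R), is_derive x (1:R) (phi I Ps i) (Dd I r i x).
  by move=> i x; apply: is_derive_phi => j hj; exact: DER.
have rho_le : forall i, (1 <= i <= I)%N -> forall u, 0 <= u -> rho i u <= t i * Dd I rho i u.
  move=> i hi u u0.
  have KD : is_derive u (1:R) (fun w => t i * phi I Ps i w - Ps i w)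
      (t i * Dd I r i u - r i u).
    have := PhiD i u => ?; have := DER i hi u => ?; exact: is_derive_comb.
  have dK : derivable (fun w => t i * phi I Ps i w - Ps i w) u 1 by exact: ex_derive.
  have := deriv_ge0_of_ndecr dK (Knd i hi).
  rewrite derive1E derive_val Dd_ext0_pos // /r /ext0 ltNge u0 /=.
  lra.
have Hlt : forall u, 0 <= u -> \sum_(1 <= i < I.+1) 2 * i%:R * rho i u < 1.
  move=> u u0; apply: le_lt_trans (sum_bound (t := t) _ _ _) _.
  - by move=> j hj; exact: rho_ge0.
  - exact: t0.
  - by move=> j hj; exact: rho_le.
  - lra.
have DIpos : forall u, 0 <= u -> 0 < Dd I rho I u.
  by move=> u u0; rewrite DI_eq subr_gt0; exact: Hlt.
have Dpos : forall i, (1 <= i <= I)%N -> forall u, 0 <= u -> 0 < Dd I rho i u.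
  move=> i hi u u0; apply: (lt_le_trans (DIpos u u0)); apply: D_ge_DI.
    by move=> j hj; exact: rho_ge0.
  by case/andP: hi.
split; first exact: isC1.
split; first exact: Hlt.
apply: le_lt_trans (sum_le_fin (t := t) _) _; last by rewrite lte_fin.
move=> i hi; apply/ereal_supP => _ [u [u0 ->]]; rewrite lee_fin.
rewrite ler_pdivrMr; last exact: Dpos.
exact: rho_le.
Qed.
End Helpers.
Unset Implicit Arguments.

Theorem lemma6p5 (R : realType) (I : nat) (hI : (0 < I)%N)
  (rho : nat -> R -> R)
  (rho_cont : forall i, (1 <= i <= I)%N -> {within @Rplus R, continuous (rho i)})
  (rho_ge0 : forall i, (1 <= i <= I)%N -> forall u, 0 <= u -> 0 <= rho i u)
  (psi : nat -> R -> R)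
  (psi_def : forall i u, (1 <= i <= I)%N -> 0 <= u ->
     psi i u = Rintegral lebesgue_measure `[0, u] (rho i)) :
  inDdensity I rho <-> inD2 I psi.
Proof.
split.
  exact: dir1.
exact: dir2.
Qed.
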